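(* Assume $\widetilde p_i\propto i^{-\beta}$ for a constant $\beta>1$, $M=\omega_K(1)$, and total training time $T\eqsim M^\beta$. Let $\alpha\in(0,1)$ and run TRA-SignGD from $\mathbf{W}_0=\mathbf{0}$ with learning rate $\eta=\Theta\big(\tfrac{\log K}{T}\big)$. Then $$\mathcal{L}^{\mathrm{TRA\text{-}SignGD}}(T)-\mathcal{L}^*\lesssim\Big(\frac{\log K}{T}\Big)^2.$$
   Context: Setup: $K=MC$ items in $M$ groups of $C$ items; $\widetilde p_1>\dots>\widetilde p_M>0$, $\sum_i\widetilde p_i=1$, $p_j=\widetilde p_i/C$ for $j$ in group $i$ (indices $(i-1)C+1,\dots,iC$). $\mathbf{E},\widetilde{\mathbf{E}}\in\mathbb{R}^{K\times K}$ are orthogonal with columns $\mathbf{E}_j,\widetilde{\mathbf{E}}_j$. Noise: $p_{i\mid j}=1-\alpha+\alpha/K$ if $i=j$, $\alpha/K$ otherwise. $\widehat p_{i\mid j}(\mathbf{W})=\exp(\widetilde{\mathbf{E}}_i^\top\mathbf{W}\mathbf{E}_j)/\sum_k\exp(\widetilde{\mathbf{E}}_k^\top\mathbf{W}\mathbf{E}_j)$; $\mathcal{L}(\mathbf{W})=-\sum_jp_j\sum_ip_{i\mid j}\log\widehat p_{i\mid j}(\mathbf{W})$, with minimal value $\mathcal{L}^*=-\big(1-\alpha+\tfrac{\alpha}{K}\big)\log\big(1-\alpha+\tfrac{\alpha}{K}\big)-\tfrac{\alpha(K-1)}{K}\log\tfrac{\alpha}{K}$. TRA-SignGD: $\mathbf{W}_{t+1}=\mathbf{W}_t-\eta\,\widetilde{\mathbf{E}}\,\mathrm{sgn}\big(\widetilde{\mathbf{E}}^\top\nabla\mathcal{L}(\mathbf{W}_t)\mathbf{E}\big)\mathbf{E}^\top$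 with entrywise $\mathrm{sgn}$; $\mathcal{L}^{\mathrm{TRA\text{-}SignGD}}(T)=\mathcal{L}(\mathbf{W}_T)$. Regime $K\gg1$, $M\ll C$; $\omega_K(1)\to\infty$ as $K\to\infty$; $\eqsim,\lesssim,\Theta$ hide constant factors. *)

(* Defs.v *)
From HB Require Import structures.
From mathcomp Require Import all_boot all_order all_algebra.
From mathcomp Require Import all_classical all_reals all_analysis.
Unset Printing Implicit Defensive.
Import Order.TTheory GRing.Theory Num.Theory.
Local Open Scope ring_scope.

(* Items are indexed by 'I_(M*C); item j (0-based) lies in group j %/ C
   (0-based), i.e. group i = (j %/ C).+1 in the paper's 1-based convention. *)

Definition ptil (R : realType) (M : nat) (beta : R) (g : nat) : R :=
  (g.+1)%:R `^ (- beta) / \sum_(k < M) (k.+1)%:R `^ (- beta).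

Definition pitem (R : realType) (M C : nat) (beta : R) (j : 'I_(M * C)) : R :=
  ptil R M beta (j %/ C) / C%:R.

Definition pcond (R : realType) (K : nat) (alpha : R) (i j : 'I_K) : R :=
  if i == j then 1 - alpha + alpha / K%:R else alpha / K%:R.

Definition orthogonal_mx (R : realType) (K : nat) (E : 'M[R]_K) : Prop :=
  E^T *m E = 1%:M /\ E *m E^T = 1%:M.

Definition phat (R : realType) (K : nat) (E Et W : 'M[R]_K) (i j : 'I_K) : R :=
  expR ((Et^T *m W *m E) i j) / \sum_(k < K) expR ((Et^T *m W *m E) k j).

Definition loss (R : realType) (M C : nat) (beta alpha : R)
  (E Et W : 'M[R]_(M * C)) : R :=
  - \sum_(j < M * C) pitem R M C beta j *
      \sum_(i < M * C) pcond R (M * C) alpha i j * ln (phat R (M * C) E Et W i j).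

Definition loss_star (R : realType) (K : nat) (alpha : R) : R :=
  - (1 - alpha + alpha / K%:R) * ln (1 - alpha + alpha / K%:R)
  - alpha * (K%:R - 1) / K%:R * ln (alpha / K%:R).

Definition grad_loss (R : realType) (M C : nat) (beta alpha : R)
  (E Et W : 'M[R]_(M * C)) : 'M[R]_(M * C) :=
  \matrix_(a, b)
     derive1 (fun h : R => loss R M C beta alpha E Et (W + h *: delta_mx a b)) 0.

Definition tra_signgd_step (R : realType) (M C : nat) (beta alpha eta : R)
  (E Et W : 'M[R]_(M * C)) : 'M[R]_(M * C) :=
  W - eta *: (Et *m map_mx Num.sg (Et^T *m grad_loss R M C beta alpha E Et W *m E)
                *m E^T).

Definition tra_signgd_iter (R : realType) (M C : nat) (beta alpha eta : R)
  (E Et : 'M[R]_(M * C)) (T : nat) : 'M[R]_(M * C) :=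
  iter T (tra_signgd_step R M C beta alpha eta E Et) 0.

Definition loss_tra_signgd (R : realType) (M C : nat) (beta alpha eta : R)
  (E Et : 'M[R]_(M * C)) (T : nat) : R :=
  loss R M C beta alpha E Et (tra_signgd_iter R M C beta alpha eta E Et T).

(* Main.v *)
Require Import Defs.
From HB Require Import structures.
From mathcomp Require Import all_boot all_order all_algebra.
From mathcomp Require Import all_classical all_reals all_analysis.
Import Order.TTheory GRing.Theory Num.Theory.
Local Open Scope ring_scope.
From mathcomp Require Import lra ring.

Section Der.
Variable R : realType.
Implicit Types (x k : R).

Lemma d_sum n (F : 'I_n -> R -> R) (dF : 'I_n -> R) x :
  (forall i, is_derive x 1 (F i) (dF i)) ->
  is_derive x 1 (fun h => \sum_(i < n) F i h) (\sum_(i < n) dF i).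
Proof. move=> H; rewrite -fct_sumE; exact: is_derive_sum. Qed.

Lemma d_scale k (F : R -> R) d x : is_derive x 1 F d ->
  is_derive x 1 (fun h => k * F h) (k * d).
Proof.
move=> H; have -> : (fun h => k * F h) = k *: F by apply/funext.
exact: is_deriveZ.
Qed.

Lemma d_neg (F : R -> R) d x : is_derive x 1 F d ->
  is_derive x 1 (fun h => - F h) (- d).
Proof.
move=> H; have -> : (fun h => - F h) = - F by apply/funext.
exact: is_deriveN.
Qed.

Lemma d_sub (F G : R -> R) d e x : is_derive x 1 F d -> is_derive x 1 G e ->
  is_derive x 1 (fun h => F h - G h) (d - e).
Proof.
move=> H1 H2; have -> : (fun h => F h - G h) = F - G by apply/funext.
exact: is_deriveB.
Qed.

Lemma d_aff v c x : is_derive x 1 (fun h : R => v + h * c) c.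
Proof.
have H := (is_deriveD (is_derive_cst v x 1) (is_deriveZ c (is_derive_id x 1))).
have -> : (fun h : R => v + h * c) = cst v + c \*: id.
  by apply/funext => h /=; rewrite mulrC.
apply: is_derive_eq H _.
by rewrite add0r /GRing.scale /= mulr1.
Qed.

Lemma d_exp_aff v c x : is_derive x 1 (fun h : R => expR (v + h * c)) (expR (v + x * c) * c).
Proof.
have -> : (fun h : R => expR (v + h * c)) = expR \o (fun h => v + h * c) by [].
exact: (is_derive1_comp (is_derive_expR _) (d_aff v c x)).
Qed.

Lemma d_ln (F : R -> R) d x : 0 < F x -> is_derive x 1 F d ->
  is_derive x 1 (fun h => ln (F h)) ((F x)^-1 * d).
Proof.
move=> Fx H; have -> : (fun h => ln (F h)) = (@ln R) \o F by [].
exact: (is_derive1_comp (is_derive1_ln Fx) H).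
Qed.

Lemma derive1_is (F : R -> R) d x : is_derive x 1 F d -> derive1 F x = d.
Proof. by move=> H; rewrite derive1E derive_val. Qed.

End Der.
Arguments d_sum {R n F dF x}. Arguments d_scale {R} k {F d x}. Arguments d_neg {R F d x}.
Arguments d_sub {R F G d e x}. Arguments d_aff {R} v c x. Arguments d_exp_aff {R} v c x.
Arguments d_ln {R F d x}. Arguments derive1_is {R F d x}.

Set Implicit Arguments.
Unset Strict Implicit.
Section Grad.
Variable R : realType.

Definition phatV n (V : 'M[R]_n) (i j : 'I_n) : R :=
  expR (V i j) / \sum_(k < n) expR (V k j).

Definition lossG n (p : 'I_n -> R) (pc : 'I_n -> 'I_n -> R) (V : 'M[R]_n) : R :=
  - \sum_(j < n) p j * \sum_(i < n) pc i j * ln (phatV V i j).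

Lemma sum_pos n (F : 'I_n -> R) (j : 'I_n) : (forall k, 0 < F k) -> 0 < \sum_k F k.
Proof.
move=> H; rewrite (bigD1 j) //=.
have : 0 <= \sum_(i < n | i != j) F i by apply: sumr_ge0 => i _; exact/ltW.
have := H j; lra.
Qed.

Lemma entry_line n (E Et W : 'M[R]_n) (a b i j : 'I_n) (h : R) :
  (Et^T *m (W + h *: delta_mx a b) *m E) i j =
  (Et^T *m W *m E) i j + h * (Et a i * E b j).
Proof.
rewrite mulmxDr mulmxDl mxE; congr (_ + _).
rewrite -scalemxAr -scalemxAl mxE; congr (_ * _).
rewrite mxE (bigD1 b) //= big1 ?addr0; last first.
  move=> k kb; rewrite mxE (bigD1 a) //= big1 ?addr0; last first.
    by move=> l la; rewrite !mxE (negbTE la) mulr0.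
  by rewrite !mxE eqxx /= (negbTE kb) mulr0 mul0r.
rewrite mxE (bigD1 a) //= big1 ?addr0; last first.
  by move=> l la; rewrite !mxE (negbTE la) mulr0.
by rewrite !mxE !eqxx mulr1.
Qed.

Lemma grad_entry n (p : 'I_n -> R) (pc : 'I_n -> 'I_n -> R) (E Et W : 'M[R]_n)
  (a b : 'I_n) : (forall j, \sum_i pc i j = 1) ->
  derive1 (fun h => lossG p pc (Et^T *m (W + h *: delta_mx a b) *m E)) 0 =
  \sum_(j < n) \sum_(i < n) p j * (phatV (Et^T *m W *m E) i j - pc i j) * (Et a i * E b j).
Proof.
move=> Hpc.
set V := Et^T *m W *m E.
set c := fun i j => Et a i * E b j.
have -> : (fun h => lossG p pc (Et^T *m (W + h *: delta_mx a b) *m E)) =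
  (fun h => - \sum_(j < n) p j * \sum_(i < n) pc i j *
     ((V i j + h * c i j) - ln (\sum_(k < n) expR (V k j + h * c k j)))).
  apply/funext => h; rewrite /lossG; congr (- _); apply: eq_bigr => j _.
  congr (_ * _); apply: eq_bigr => i _; congr (_ * _).
  rewrite /phatV !entry_line.
  under eq_bigr => k _ do rewrite entry_line.
  rewrite ln_div ?expRK // posrE ?expR_gt0 //.
  by apply: (sum_pos i) => k; exact: expR_gt0.
apply: derive1_is.
have Hpos : forall j : 'I_n, 0 < \sum_(k < n) expR (V k j + 0 * c k j).
  by move=> j; apply: (sum_pos j) => k; exact: expR_gt0.
have D := fun j i => d_sub (d_aff (V i j) (c i j) 0)
   (d_ln (Hpos j) (d_sum (fun k => d_exp_aff (V k j) (c k j) 0))).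
apply: (is_derive_eq (d_neg (d_sum (fun j => d_scale (p j)
   (d_sum (fun i => d_scale (pc i j) (D j i))))))).
rewrite -sumrN; apply: eq_bigr => j _.
set S := \sum_(k < n) expR (V k j).
have S1 : \sum_(k < n) expR (V k j + 0 * c k j) = S.
  by apply: eq_bigr => k _; rewrite mul0r addr0.
have S2 : \sum_(k < n) expR (V k j + 0 * c k j) * c k j = \sum_(k < n) expR (V k j) * c k j.
  by apply: eq_bigr => k _; rewrite mul0r addr0.
rewrite S1 S2.
have S0 : 0 < S by apply: (sum_pos j) => k; exact: expR_gt0.
under eq_bigr => i _ do rewrite mulrBr.
rewrite sumrB -mulr_suml Hpc mul1r.
have -> : \sum_(i < n) p j * (phatV V i j - pc i j) * (Et a i * E b j) =
   p j * (S^-1 * \sum_(k < n) expR (V k j) * c k j - \sum_(i < n) pc i j * c i j).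
  rewrite mulr_sumr -sumrB mulr_sumr; apply: eq_bigr => i _.
  rewrite /phatV -/S /c; ring.
ring.
Qed.

End Grad.

Set Implicit Arguments.
Unset Strict Implicit.

Section Mat.
Variable R : realType.

Definition Gm n (p : 'I_n -> R) (pc : 'I_n -> 'I_n -> R) (V : 'M[R]_n) : 'M[R]_n :=
  \matrix_(i, j) (p j * (phatV V i j - pc i j)).

Lemma grad_formula M C beta alpha (E Et W : 'M[R]_(M * C)) :
  (forall j, \sum_i pcond R (M * C) alpha i j = 1) ->
  grad_loss R M C beta alpha E Et W =
  Et *m Gm (pitem R M C beta) (pcond R (M * C) alpha) (Et^T *m W *m E) *m E^T.
Proof.
move=> Hpc; apply/matrixP => a b; rewrite mxE.
have -> : derive1 (fun h => loss R M C beta alpha E Et (W + h *: delta_mx a b)) 0 =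
   derive1 (fun h => lossG (pitem R M C beta) (pcond R (M * C) alpha)
        (Et^T *m (W + h *: delta_mx a b) *m E)) 0 by [].
rewrite grad_entry //.
rewrite mxE; apply: eq_bigr => j _; rewrite mxE mulr_suml; apply: eq_bigr => i _.
by rewrite !mxE; ring.
Qed.

Lemma conj_back n (E Et G : 'M[R]_n) : orthogonal_mx R n E -> orthogonal_mx R n Et ->
  Et^T *m (Et *m G *m E^T) *m E = G.
Proof.
move=> [oE _] [oEt _].
by rewrite !mulmxA oEt mul1mx -mulmxA oE mulmx1.
Qed.

Lemma V_step n (E Et W S : 'M[R]_n) (eta : R) : orthogonal_mx R n E -> orthogonal_mx R n Et ->
  Et^T *m (W - eta *: (Et *m S *m E^T)) *m E = Et^T *m W *m E - eta *: S.
Proof.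
move=> oE oEt.
by rewrite mulmxBr mulmxBl -scalemxAr -scalemxAl conj_back.
Qed.

Lemma step_V M C beta alpha eta (E Et W : 'M[R]_(M * C)) :
  (forall j, \sum_i pcond R (M * C) alpha i j = 1) ->
  orthogonal_mx R (M * C) E -> orthogonal_mx R (M * C) Et ->
  Et^T *m tra_signgd_step R M C beta alpha eta E Et W *m E =
  Et^T *m W *m E - eta *: map_mx Num.sg
     (Gm (pitem R M C beta) (pcond R (M * C) alpha) (Et^T *m W *m E)).
Proof.
move=> Hpc oE oEt.
by rewrite /tra_signgd_step V_step // grad_formula // conj_back.
Qed.

End Mat.

Set Implicit Arguments.
Unset Strict Implicit.

Section Str.
Variable R : realType.

Definition str n (y z : R) : 'M[R]_n := \matrix_(i, j) (if i == j then y else z).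

Lemma sum_ind n (j : 'I_n) (F : 'I_n -> R) a b :
  (forall k, F k = a + (k == j)%:R * b) -> \sum_(k < n) F k = a *+ n + b.
Proof.
move=> H; rewrite (eq_bigr _ (fun k _ => H k)) big_split /= sumr_const card_ord.
congr (_ + _); rewrite (bigD1 j) //= eqxx mul1r big1 ?addr0 //.
by move=> k /negbTE ->; rewrite mul0r.
Qed.

Lemma sg_exp (u v : R) : Num.sg (expR u - expR v) = Num.sg (u - v).
Proof.
case: (ltgtP u v) => h.
- rewrite !ltr0_sg //; rewrite subr_lt0 //; by rewrite ltr_expR.
- rewrite !gtr0_sg //; rewrite subr_gt0 //; by rewrite ltr_expR.
- by rewrite h !subrr.
Qed.

Lemma sg_pd (q a m s : R) : 0 < a -> 0 < m -> 0 < q -> 1 - q = a * m ->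
  Num.sg (expR s / (m + expR s) - q) = Num.sg (s - ln (q / a)).
Proof.
move=> a0 m0 q0 hq.
have u0 := expR_gt0 s.
have mu0 : 0 < m + expR s by lra.
have -> : expR s / (m + expR s) - q = (a * m / (m + expR s)) * (expR s - expR (ln (q / a))).
  rewrite lnK ?posrE ?divr_gt0 //.
  have hq' : q = 1 - a * m by lra.
  rewrite hq'; field; apply/andP; split; [lra|]. by rewrite gt_eqF.
rewrite sgrM gtr0_sg ?mul1r ?sg_exp //.
by apply: divr_gt0 => //; apply: mulr_gt0.
Qed.


Section StrN.
Variables (n : nat) (alpha : R).
Hypothesis n2 : (2 <= n)%N.
Hypothesis al : 0 < alpha < 1.

Let nR := (n%:R : R).
Definition qq := 1 - alpha + alpha / n%:R.
Definition aa := alpha / (n%:R : R).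
Definition mm := (n%:R : R) - 1.
Definition pd (y z : R) := expR (y - z) / (mm + expR (y - z)).
Definition po (y z : R) := 1 / (mm + expR (y - z)).

Lemma nR2 : 2 <= (n%:R : R).
Proof. by rewrite (ler_nat R 2 n). Qed.

Lemma mm_gt0 : 0 < mm.
Proof. rewrite /mm; have := nR2; lra. Qed.

Lemma aa_gt0 : 0 < aa.
Proof. case/andP: al => a0 a1; rewrite /aa; apply: divr_gt0; [lra|]; have := nR2; lra. Qed.

Lemma qq_gt0 : 0 < qq.
Proof. case/andP: al => a0 a1; rewrite /qq; have := aa_gt0; rewrite /aa; lra. Qed.

Lemma qq_rel : 1 - qq = aa * mm.
Proof. rewrite /qq /aa /mm; field; have := nR2; lra. Qed.

Lemma pcondE (i j : 'I_n) : pcond R n alpha i j = aa + (i == j)%:R * (qq - aa).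
Proof. rewrite /pcond /qq /aa; case: eqP => _; rewrite ?mul1r ?mul0r; ring. Qed.

Lemma sum_pcond (j : 'I_n) : \sum_i pcond R n alpha i j = 1.
Proof.
rewrite (sum_ind (j := j) (a := aa) (b := qq - aa)); last by move=> k; exact: pcondE.
rewrite -mulr_natr; have := qq_rel; rewrite /mm => h.
have -> : aa * n%:R + (qq - aa) = aa * (n%:R - 1) + qq by ring.
lra.
Qed.


Lemma phat_str (y z : R) (i j : 'I_n) :
  phatV (str n y z) i j = if i == j then pd y z else po y z.
Proof.
rewrite /phatV.
rewrite (sum_ind (j := j) (a := expR z) (b := expR y - expR z)); last first.
  by move=> k; rewrite mxE; case: eqP => _; rewrite ?mul1r ?mul0r; ring.
have ey : expR y = expR (y - z) * expR z by rewrite -expRD subrK.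
have ez := expR_gt0 z; have es := expR_gt0 (y - z); have m0 := mm_gt0.
rewrite /mm in m0.
rewrite mxE /pd /po /mm -mulr_natr; case: eqP => _; rewrite ey.
  by field; apply/andP; split; rewrite gt_eqF //; nra.
by field; apply/andP; split; rewrite gt_eqF //; nra.
Qed.

Lemma pd_po (y z : R) : pd y z + mm * po y z = 1.
Proof.
have es := expR_gt0 (y - z); have m0 := mm_gt0.
by rewrite /pd /po; field; rewrite gt_eqF //; lra.
Qed.

Lemma sgG (p : 'I_n -> R) (y z : R) : (forall j, 0 < p j) ->
  map_mx Num.sg (Gm p (pcond R n alpha) (str n y z)) =
  str n (Num.sg (pd y z - qq)) (- Num.sg (pd y z - qq)).
Proof.
move=> pp; apply/matrixP => i j; rewrite !mxE phat_str pcondE.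
rewrite sgrM (gtr0_sg (pp j)) mul1r.
case: eqP => _; rewrite ?mul1r ?mul0r ?addr0.
  by congr Num.sg; ring.
have -> : po y z - aa = - (pd y z - qq) / mm.
  have := pd_po y z; have := qq_rel; have := mm_gt0 => m0 h1 h2.
  apply: (mulIf (x := mm)); first by rewrite gt_eqF.
  rewrite mulrBl divfK ?gt_eqF //; lra.
have mi : 0 < mm^-1 by rewrite invr_gt0 mm_gt0.
by rewrite sgrM sgrN (gtr0_sg mi) mulr1.
Qed.

Lemma str_step (y z eta sg : R) :
  str n y z - eta *: str n sg (- sg) = str n (y - eta * sg) (z + eta * sg).
Proof.
by apply/matrixP => i j; rewrite !mxE; case: eqP => _; ring.
Qed.

Lemma loss_str (p : 'I_n -> R) (y z : R) :
  lossG p (pcond R n alpha) (str n y z) =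
  - (\sum_j p j) * (qq * ln (pd y z) + (aa * mm) * ln (po y z)).
Proof.
rewrite /lossG mulNr mulr_suml; congr (- _); apply: eq_bigr => j _.
congr (_ * _).
rewrite (sum_ind (j := j) (a := aa * ln (po y z)) (b := qq * ln (pd y z) - aa * ln (po y z))).
  by rewrite -mulr_natr /mm; ring.
by move=> k; rewrite phat_str pcondE; case: eqP => _; rewrite /= ?mul1r ?mul0r; ring.
Qed.

End StrN.
End Str.

Set Implicit Arguments.
Unset Strict Implicit.

Section Real.
Variable R : realType.

Lemma ln_le_sub1 (x : R) : 0 < x -> ln x <= x - 1.
Proof.
move=> x0; have := @le_ln1Dx R (x - 1).
have -> : 1 + (x - 1) = x by ring.
apply; lra.
Qed.

Lemma lnmix (q x y E : R) : 0 < q < 1 -> 0 < x <= E -> 0 < y <= E ->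
  ln (q * x + (1 - q) * y) <= ln E.
Proof.
move=> /andP[q0 q1] /andP[x0 xE] /andP[y0 yE].
rewrite ler_ln ?posrE; [|nra|lra].
nra.
Qed.

Lemma KL_bound (q d : R) : 0 < q < 1 ->
  q * ln (q + (1 - q) / expR d) + (1 - q) * ln (expR d * q + (1 - q)) <= 3 * d ^+ 2.
Proof.
move=> qq; have /andP[q0 q1] := qq.
have r0 := expR_gt0 d; have t0 := expR_gt0 (- d).
have rt : expR d * expR (- d) = 1 by rewrite -expRD subrr expR0.
have tE : (expR d)^-1 = expR (- d) by rewrite expRN.
rewrite tE.
have hr := expR_ge1Dx d; have ht := expR_ge1Dx (- d).
set r := expR d in r0 rt hr *; set t := expR (- d) in t0 rt ht *.
have [dsmall|dbig] := boolP ((- (1/2) <= d) && (d <= 1/2)).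
  case/andP: dsmall => d1 d2.
  have A := ln_le_sub1 (x := q + (1 - q) * t) ltac:(nra).
  have B := ln_le_sub1 (x := r * q + (1 - q)) ltac:(nra).
  have ra : r * (1 - d) <= 1 by nra.
  have ta : t * (1 + d) <= 1 by nra.
  have rb : r <= 1 + d + 2 * d ^+ 2.
    have h : 1 <= (1 + d + 2 * d ^+ 2) * (1 - d) by rewrite expr2; nra.
    nra.
  have tb : t <= 1 - d + 2 * d ^+ 2.
    have h : 1 <= (1 - d + 2 * d ^+ 2) * (1 + d) by rewrite expr2; nra.
    nra.
  have e1 : q * ln (q + (1 - q) * t) + (1 - q) * ln (r * q + (1 - q))
     <= q * (1 - q) * (r + t - 2).
    have A' := ler_wpM2l (ltW q0) A.
    have B' : (1 - q) * ln (r * q + (1 - q)) <= (1 - q) * (r * q + (1 - q) - 1).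
      by apply: ler_wpM2l => //; lra.
    have -> : q * (1 - q) * (r + t - 2) =
      q * (q + (1 - q) * t - 1) + (1 - q) * (r * q + (1 - q) - 1) by ring.
    lra.
  have e2 : q * (1 - q) * (r + t - 2) <= q * (1 - q) * (4 * d ^+ 2).
    by apply: ler_wpM2l; nra.
  have e3 : q * (1 - q) <= 1/4.
    have := sqr_ge0 (q - 1/2); rewrite expr2; nra.
  have : 0 <= d ^+ 2 by rewrite expr2; nra.
  nra.
have [dpos|dneg] := boolP (0 <= d).
  have d2 : 1/2 < d by move: dbig; rewrite negb_and -!ltNge; case/orP; lra.
  have A : ln (q + (1 - q) * t) <= d.
    rewrite -[X in _ <= X]expRK -[X in ln (X + _)]mulr1.
    apply: lnmix => //; apply/andP; split=> //; last by rewrite /t ler_expR; lra.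
    by rewrite -expR0 ler_expR.
  have B : ln (r * q + (1 - q)) <= d.
    rewrite -[X in _ <= X]expRK mulrC -[X in ln (_ + X)]mulr1.
    apply: lnmix => //; apply/andP; split=> //.
    by rewrite -expR0 ler_expR.
  rewrite expr2; nra.
have d2 : d < - (1/2) by move: dbig dneg; rewrite negb_and -!ltNge; case/orP; lra.
have A : ln (q + (1 - q) * t) <= - d.
  rewrite -[X in _ <= X]expRK -[X in ln (X + _)]mulr1.
  apply: lnmix => //; apply/andP; split=> //.
  by rewrite -expR0 ler_expR; lra.
have B : ln (r * q + (1 - q)) <= - d.
  rewrite -[X in _ <= X]expRK mulrC -[X in ln (_ + X)]mulr1.
  apply: lnmix => //.
    by rewrite r0 /= /r ler_expR; lra.
  by rewrite ltr01 /= -expR0 ler_expR; lra.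
rewrite expr2; nra.
Qed.

End Real.

From mathcomp Require Import zify.
Set Implicit Arguments.
Unset Strict Implicit.

Section Pitem.
Variable R : realType.

Lemma sum_blocks (f : nat -> R) (M C : nat) : (0 < C)%N ->
  \sum_(j < M * C) f (j %/ C)%N = (\sum_(g < M) f g) *+ C.
Proof.
move=> C0; rewrite -(big_mkord xpredT (fun j => f (j %/ C)%N)).
elim: M => [|M IH]; first by rewrite mul0n big_geq // big_ord0 mul0rn.
rewrite (big_cat_nat _ (n := M * C)) //=; last by rewrite mulSn leq_addl.
rewrite IH big_ord_recr /= mulrnDl; congr (_ + _).
have -> : (M.+1 * C = 0 + M * C + C)%N by rewrite mulSn addnC.
rewrite -{1}(add0n (M * C)%N) big_addn.
rewrite (eq_big_nat _ _ (F2 := fun _ => f M)).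
  by rewrite sumr_const_nat; congr (_ *+ _); lia.
move=> i /andP[_ hi]; congr f.
have hi' : (i < C)%N by lia.
by rewrite addnC divnMDl // divn_small // addn0.
Qed.

Lemma ptil_gt0 M beta g : (0 < M)%N -> 0 < ptil R M beta g.
Proof.
move=> M0; rewrite /ptil; apply: divr_gt0; first by apply: powR_gt0; rewrite ltr0n.
case: M M0 => // M _; rewrite big_ord_recl /=.
have : 0 <= \sum_(i < M) (bump 0 i).+1%:R `^ (- beta) :> R.
  by apply: sumr_ge0 => i _; exact: powR_ge0.
have : 0 < 1%:R `^ (- beta) :> R by apply: powR_gt0.
lra.
Qed.

Lemma sum_ptil M beta : (0 < M)%N -> \sum_(g < M) ptil R M beta g = 1.
Proof.
move=> M0; rewrite /ptil -mulr_suml mulfV // gt_eqF //.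
case: M M0 => // M _; rewrite big_ord_recl /=.
have : 0 <= \sum_(i < M) (bump 0 i).+1%:R `^ (- beta) :> R.
  by apply: sumr_ge0 => i _; exact: powR_ge0.
have : 0 < 1%:R `^ (- beta) :> R by apply: powR_gt0.
lra.
Qed.

Lemma pitem_gt0 M C beta (j : 'I_(M * C)) : (0 < M)%N -> (0 < C)%N -> 0 < pitem R M C beta j.
Proof.
move=> M0 C0; rewrite /pitem; apply: divr_gt0; first exact: ptil_gt0.
by rewrite ltr0n.
Qed.

Lemma sum_pitem M C beta : (0 < M)%N -> (0 < C)%N -> \sum_j pitem R M C beta j = 1.
Proof.
move=> M0 C0; rewrite /pitem -mulr_suml.
rewrite (sum_blocks (fun g => ptil R M beta g)) // sum_ptil //.
by rewrite mulfV // pnatr_eq0 -lt0n.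
Qed.

End Pitem.

Set Implicit Arguments.
Unset Strict Implicit.

Section Fin.
Variable R : realType.

Lemma gap_alg (q a m s : R) : 0 < q -> 0 < a -> 0 < m -> 1 - q = a * m ->
  - (q * ln (expR s / (m + expR s)) + (a * m) * ln (1 / (m + expR s)))
   - (- q * ln q - (1 - q) * ln a) =
  q * ln (q + (1 - q) / expR (s - ln (q / a)))
  + (1 - q) * ln (expR (s - ln (q / a)) * q + (1 - q)).
Proof.
move=> q0 a0 m0 hq.
have u0 := expR_gt0 s.
have ex : expR (s - ln (q / a)) = expR s * a / q.
  rewrite expRD expRN lnK ?posrE ?divr_gt0 //; field.
  by rewrite !gt_eqF.
have E1 : q + (1 - q) / (expR s * a / q) = q * (m + expR s) / expR s.
  rewrite hq; field; rewrite !gt_eqF //=; lra.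
have E2 : expR s * a / q * q + (1 - q) = a * (m + expR s).
  rewrite hq; field; rewrite !gt_eqF //=; lra.
rewrite ex E1 E2.
have mu0 : 0 < m + expR s by lra.
rewrite !ln_div ?lnM ?posrE ?mulr_gt0 ?ltr01 // ln1 hq.
ring.
Qed.

Lemma gap_str n (alpha : R) (p : 'I_n -> R) (y z : R) : (1 < n)%N -> 0 < alpha < 1 ->
  \sum_j p j = 1 ->
  lossG p (pcond R n alpha) (str n y z) - loss_star R n alpha =
  qq n alpha * ln (qq n alpha + (1 - qq n alpha) / expR (y - z - ln (qq n alpha / aa n alpha)))
  + (1 - qq n alpha) * ln (expR (y - z - ln (qq n alpha / aa n alpha)) * qq n alpha + (1 - qq n alpha)).
Proof.
move=> n2 al hp.
rewrite loss_str // hp mulN1r.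
have q0 := qq_gt0 n2 al; have a0 := aa_gt0 n2 al; have m0 := mm_gt0 R n2.
have hq := qq_rel alpha n2.
rewrite -(gap_alg (y - z) q0 a0 m0 hq).
congr (_ - _).
rewrite /loss_star hq.
have -> : alpha * ((n%:R : R) - 1) / n%:R = aa n alpha * mm R n.
  rewrite /aa /mm; field; rewrite gt_eqF //.
  by rewrite ltr0n; apply: ltn_trans n2.
by rewrite /qq /aa; ring.
Qed.

Definition INV (eta xs : R) (t : nat) (d : R) :=
  d <= 2 * eta /\ (2 * eta * t%:R - xs <= d \/ - (2 * eta) <= d).

Lemma inv_step eta xs t d : 0 <= eta -> INV eta xs t d ->
  INV eta xs t.+1 (d - 2 * eta * Num.sg d).
Proof.
move=> e0 [h1 h2]; rewrite /INV.
have -> : (t.+1%:R : R) = t%:R + 1 by rewrite -addn1 natrD.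
rewrite mulrDr mulr1.
case: (ltgtP d 0) => hd.
- rewrite ltr0_sg //; split; first lra.
  by case: h2 => h; [left|right]; lra.
- rewrite gtr0_sg //; split; first lra.
  by right; lra.
- by rewrite hd sgr0; split; [lra|right; lra].
Qed.

End Fin.

From mathcomp Require Import zify.
Set Implicit Arguments.
Unset Strict Implicit.

Lemma nat_facts (B M C : nat) : (B.+2 <= M)%N -> (B.+2 * M <= C)%N ->
  [/\ (0 < M)%N, (0 < C)%N, (1 < M * C)%N & (B.+2 <= M * C)%N].
Proof. move=> h1 h2; split; nia. Qed.

Section Fin2.
Variable R : realType.

Lemma xs_facts n (alpha : R) : (1 < n)%N -> 0 < alpha < 1 -> 1 <= alpha * n%:R ->
  [/\ qq n alpha < 1, 0 <= ln (qq n alpha / aa n alpha) &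
      ln (qq n alpha / aa n alpha) <= 2 * ln (n%:R : R)].
Proof.
move=> n2 hal aK.
have /andP[al0 al1] := hal.
have q0 := qq_gt0 n2 hal; have a0 := aa_gt0 n2 hal.
have K0 : 0 < (n%:R : R) by rewrite ltr0n; apply: ltn_trans n2.
have q1 : qq n alpha < 1.
  rewrite /qq; have : alpha / n%:R < alpha.
    rewrite ltr_pdivrMr // ltr_pMr // ltr1n //.
  lra.
split => //.
  apply: ln_ge0; rewrite ler_pdivlMr // mul1r /qq -/(aa n alpha); lra.
have -> : 2 * ln (n%:R : R) = ln (n%:R ^+ 2) by rewrite lnXn // mulr2n; ring.
rewrite ler_ln ?posrE ?divr_gt0 ?exprn_gt0 //.
rewrite ler_pdivrMr // /aa expr2.
have -> : n%:R * n%:R * (alpha / n%:R) = n%:R * alpha :> R by field; rewrite gt_eqF.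
lra.
Qed.

Lemma final_bound (q d eta L : R) : 0 < q < 1 -> eta = L ->
  - (2 * eta) <= d <= 2 * eta ->
  q * ln (q + (1 - q) / expR d) + (1 - q) * ln (expR d * q + (1 - q)) <= 12 * L ^+ 2.
Proof.
move=> hq eL /andP[h1 h2].
apply: le_trans (KL_bound _ hq) _.
rewrite -eL !expr2; nra.
Qed.

Lemma setup (alpha a1 beta : R) (B M C T : nat) (eta : R) :
  0 < alpha < 1 -> alpha^-1 < B%:R -> (B.+2 <= M * C)%N -> (0 < M)%N -> 0 < a1 ->
  a1 * M%:R `^ beta <= T%:R ->
  1 * (ln (M * C)%N%:R / T%:R) <= eta <= 1 * (ln (M * C)%N%:R / T%:R) ->
  [/\ 1 <= alpha * (M * C)%N%:R, 0 <= eta, eta = ln (M * C)%N%:R / T%:R &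
      eta * T%:R = ln (M * C)%N%:R].
Proof.
move=> /andP[al0 al1] hB BC M0 ha1 hT heta.
have K0 : 0 < ((M * C)%N%:R : R) by rewrite ltr0n; apply: leq_trans BC.
have aK : 1 <= alpha * (M * C)%N%:R.
  have h1 : (B.+2%:R : R) <= (M * C)%N%:R by rewrite ler_nat; exact: BC.
  have h2 : (B%:R : R) <= B.+2%:R by rewrite ler_nat -addn2 leq_addr.
  have h3 : alpha^-1 <= (M * C)%N%:R by lra.
  have := ler_wpM2l (ltW al0) h3; rewrite mulfV ?gt_eqF //.
have Mb : 0 < (M%:R : R) `^ beta by apply: powR_gt0; rewrite ltr0n.
have T0 : 0 < (T%:R : R).
  have : 0 < a1 * M%:R `^ beta by apply: mulr_gt0.
  lra.
have lnK0 : 0 <= ln ((M * C)%N%:R : R).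
  apply: ln_ge0; rewrite ler1n; apply: leq_trans BC; by [].
have L0 : 0 <= ln ((M * C)%N%:R : R) / T%:R by apply: divr_ge0 => //; lra.
have eL : eta = ln ((M * C)%N%:R : R) / T%:R.
  by move: heta; rewrite !mul1r => /andP[h1 h2]; lra.
split => //; first by rewrite eL.
by rewrite eL divfK ?gt_eqF.
Qed.


Lemma inv0 (eta xs : R) : 0 <= eta -> 0 <= xs -> INV eta xs 0 (0 - 0 - xs).
Proof. move=> e0 x0; rewrite /INV mulr0; split; [lra|left; lra]. Qed.

Lemma inv_final (eta xs : R) (T : nat) d : 0 <= eta -> xs <= 2 * (eta * T%:R) ->
  INV eta xs T d -> - (2 * eta) <= d <= 2 * eta.
Proof.
move=> e0 hx [h1 h2]; apply/andP; split => //.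
by case: h2 => h; lra.
Qed.

Lemma d_rel (y z eta sg xs : R) :
  y - eta * sg - (z + eta * sg) - xs = (y - z - xs) - 2 * eta * sg.
Proof. ring. Qed.

End Fin2.

Theorem theoremH2 (R : realType) (beta alpha : R) :
  1 < beta -> 0 < alpha < 1 ->
  exists b1 b2 : R, 0 < b1 /\ b1 <= b2 /\
  forall a1 a2 : R, 0 < a1 -> a1 <= a2 ->
  exists (A : R) (N : nat), 0 < A /\
  forall (M C T : nat) (eta : R) (E Et : 'M[R]_(M * C)),
    (N <= M)%N ->
    (N * M <= C)%N ->
    a1 * M%:R `^ beta <= T%:R <= a2 * M%:R `^ beta ->
    b1 * (ln (M * C)%:R / T%:R) <= eta <= b2 * (ln (M * C)%:R / T%:R) ->
    orthogonal_mx R (M * C) E -> orthogonal_mx R (M * C) Et ->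
    loss_tra_signgd R M C beta alpha eta E Et T - loss_star R (M * C) alpha
      <= A * (ln (M * C)%:R / T%:R) ^+ 2.
Proof.
move=> hb hal.
exists 1, 1; split; first exact: ltr01. split; first exact: lexx.
move=> a1 a2 ha1 ha12.
have al0 : 0 <= alpha^-1 by rewrite invr_ge0; case/andP: hal => h _; exact: ltW.
have hB := archi_boundP al0.
exists 12, (Num.Def.archi_bound alpha^-1).+2; split; first by rewrite ltr0n.
move=> M C T eta E Et hNM hC hT heta oE oEt.
have [M0 C0 K2 BC] := nat_facts hNM hC.
have hT1 : a1 * M%:R `^ beta <= T%:R by case/andP: hT.
have [aK e0 eL etaT] := setup hal hB BC M0 ha1 hT1 heta.
have [q1 xs0 xs2] := xs_facts K2 hal aK.
have q0 := qq_gt0 K2 hal; have a0 := aa_gt0 K2 hal; have m0 := mm_gt0 R K2.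
have hq := qq_rel alpha K2.
have hx : ln (qq (M * C) alpha / aa (M * C) alpha) <= 2 * (eta * T%:R) by rewrite etaT.
have inv : forall t, exists y z,
    Et^T *m tra_signgd_iter R M C beta alpha eta E Et t *m E = str (M * C) y z /\
    INV eta (ln (qq (M * C) alpha / aa (M * C) alpha)) t
        (y - z - ln (qq (M * C) alpha / aa (M * C) alpha)).
  elim => [|t [y [z [hV hI]]]].
    exists 0, 0; split; last exact: inv0.
    rewrite /tra_signgd_iter /= mulmx0 mul0mx; apply/matrixP => i j.
    by rewrite !mxE; case: eqP.
  exists (y - eta * Num.sg (pd (M * C) y z - qq (M * C) alpha)),
         (z + eta * Num.sg (pd (M * C) y z - qq (M * C) alpha)); split.
    have -> : tra_signgd_iter R M C beta alpha eta E Et t.+1 =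
      tra_signgd_step R M C beta alpha eta E Et (tra_signgd_iter R M C beta alpha eta E Et t)
      by [].
    rewrite step_V //; last exact: sum_pcond.
    rewrite hV sgG //; last by move=> j; apply: pitem_gt0.
    exact: str_step.
  rewrite d_rel /pd (sg_pd _ a0 m0 q0 hq).
  exact: inv_step.
have [y [z [hV hI]]] := inv T.
rewrite /loss_tra_signgd.
have -> : loss R M C beta alpha E Et (tra_signgd_iter R M C beta alpha eta E Et T) =
   lossG (pitem R M C beta) (pcond R (M * C) alpha)
     (Et^T *m tra_signgd_iter R M C beta alpha eta E Et T *m E) by [].
rewrite hV gap_str //; last exact: sum_pitem.
apply: final_bound eL _; first by rewrite q0 q1.
exact: inv_final hx hI.
Qed.
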